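(* Let $W$ be a discrete memoryless channel with finite input alphabet $\mathcal{X}$ and finite output alphabet $\mathcal{Y}$, and let $\vartheta(\rho)$ be defined as in the context. Let $\{\bm{x}_1,\ldots,\bm{x}_M\}\subseteq\mathcal{X}^n$ be any code of block-length $n$ with $M$ codewords, and let $\bm{\Psi}_m=\bm{\psi}_{x_{m,1}}\otimes\cdots\otimes\bm{\psi}_{x_{m,n}}$ be the state vector of codeword $\bm{x}_m=(x_{m,1},\ldots,x_{m,n})$. Then for every $\rho\geq 1$, $$\max_{m}\sum_{m'\neq m}\langle\bm{\Psi}_m,\bm{\Psi}_{m'}\rangle \;\geq\; \frac{\left(M e^{-n\vartheta(\rho)}-1\right)^{\rho}}{(M-1)^{\rho-1}}.$$
   Context: $W(y|x)$, $x\in\mathcal{X}$, $y\in\mathcal{Y}$, are the transition probabilities of the channel; the channel is memoryless, so $W^{(n)}(\bm{y}|\bm{x})=\prod_{i=1}^n W(y_i|x_i)$. For each input symbol $x$, the state vector $\bm{\psi}_x\in\mathbb{R}^{|\mathcal{Y}|}$ has components $\bm{\psi}_x(y)=\sqrt{W(y|x)}$ (nonnegative square roots), so it is a unit vector and $\langle\bm{\psi}_x,\bm{\psi}_{x'}\rangle=\sum_y\sqrt{W(y|x)W(y|x')}\ge 0$; $\otimes$ is the Kronecker product, and $\langle\bm{\Psi}_m,\bm{\Psi}_{m'}\rangle=\sum_{\bm{y}\in\mathcal{Y}^n}\sqrt{W^{(n)}(\bm{y}|\bm{x}_m)W^{(n)}(\bm{y}|\bm{x}_{m'})}$. For $\rho\ge1$,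 an orthonormal representation of degree $\rho$ is a family $\{\tilde{\bm{\psi}}_x\}_{x\in\mathcal{X}}$ of unit-norm vectors in some (complex) Hilbert space such that $|\langle\tilde{\bm{\psi}}_x,\tilde{\bm{\psi}}_{x'}\rangle|\le(\langle\bm{\psi}_x,\bm{\psi}_{x'}\rangle)^{1/\rho}$ for all $x,x'$; $\Gamma(\rho)$ denotes the set of all such representations. The value of a representation is $V(\{\tilde{\bm{\psi}}_x\})=\min_{\bm{f}}\max_x\log\frac{1}{|\langle\tilde{\bm{\psi}}_x,\bm{f}\rangle|^2}$, the minimum over unit-norm vectors $\bm{f}$ in the same space, and $\vartheta(\rho)=\min_{\{\tilde{\bm{\psi}}_x\}\in\Gamma(\rho)}V(\{\tilde{\bm{\psi}}_x\})$. Logarithms are natural. *)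

(* Defs.v *)
From HB Require Import structures.
From mathcomp Require Import all_boot all_order all_algebra.
From mathcomp Require Import all_classical all_reals all_analysis.
From mathcomp Require complex.
Import complex.ComplexField.
Set Implicit Arguments. Unset Strict Implicit. Unset Printing Implicit Defensive.
Import Order.TTheory GRing.Theory Num.Theory.
Local Open Scope ring_scope.
Local Open Scope classical_set_scope.

Definition is_channel (R : realType) (X Y : finType) (W : X -> Y -> R) : Prop :=
  (forall x y, 0 <= W x y) /\ (forall x, \sum_(y : Y) W x y = 1).

Definition ip_psi (R : realType) (X Y : finType) (W : X -> Y -> R) (x x' : X) : R :=
  \sum_(y : Y) Num.sqrt (W x y) * Num.sqrt (W x' y).

Definition ip_Psi (R : realType) (X Y : finType) (W : X -> Y -> R) (n : nat)
  (xm xm' : 'I_n -> X) : R :=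
  \sum_(y : {ffun 'I_n -> Y})
     Num.sqrt ((\prod_(i < n) W (xm i) (y i)) * (\prod_(i < n) W (xm' i) (y i))).

Notation C R := (complex.complex R).
Definition cabs (R : realType) (z : C R) : R :=
  Num.sqrt (complex.Re z ^+ 2 + complex.Im z ^+ 2).

Definition cinner (R : realType) (d : nat) (u v : 'I_d -> C R) : C R :=
  \sum_(i < d) u i * complex.conjc (v i).

Definition unit_vec (R : realType) (d : nat) (u : 'I_d -> C R) : Prop :=
  cinner u u = 1.

Definition orth_rep (R : realType) (X Y : finType) (W : X -> Y -> R) (rho : R)
  (d : nat) (t : X -> 'I_d -> C R) : Prop :=
  (forall x, unit_vec (t x)) /\
  (forall x x', cabs (cinner (t x) (t x')) <= (ip_psi W x x') `^ (rho^-1)).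

(** Set of values  max_x log (1/|<t_x,f>|^2)  over all representations t in
    Gamma(rho) (in any C^d) and unit vectors f with all <t_x,f> <> 0
    (other f give the value +oo, which does not affect the infimum). *)
Definition rep_values (R : realType) (X Y : finType) (W : X -> Y -> R) (rho : R)
  : set R :=
  [set v | exists (d : nat) (t : X -> 'I_d -> C R) (f : 'I_d -> C R),
     [/\ orth_rep W rho t, unit_vec f,
         (forall x, 0 < cabs (cinner (t x) f)) &
         v = \big[Num.max/0]_(x : X) ln ((cabs (cinner (t x) f) ^+ 2)^-1)]].

Definition vartheta (R : realType) (X Y : finType) (W : X -> Y -> R) (rho : R) : R :=
  inf (rep_values W rho).

(* Main.v *)
Require Import Defs.
From HB Require Import structures.
From mathcomp Require Import all_boot all_order all_algebra.
From mathcomp Require Import all_classical all_reals all_analysis.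
From mathcomp Require Import complex.
From mathcomp Require Import ring lra.
Import Order.TTheory GRing.Theory Num.Theory.
Local Open Scope ring_scope.

Section CH.
Local Set Implicit Arguments.
Local Unset Strict Implicit.
Variable R : realType.
Local Notation CC := (complex R).
Local Notation cj := (@conjc R).

Lemma cabsE (z : CC) : ((cabs z)%:C)%C = `|z|.
Proof. by case: z => a b; rewrite normc_def. Qed.

Lemma cabs_ge0 (z : CC) : 0 <= cabs z.
Proof. exact: sqrtr_ge0. Qed.

Lemma cabsM (z w : CC) : cabs (z * w) = cabs z * cabs w.
Proof. apply: (@complexI R); by rewrite rmorphM /= !cabsE normrM. Qed.

Lemma mulcJ (z : CC) : z * cj z = ((cabs z ^+ 2)%:C)%C.
Proof.
case: z => a b; rewrite /cabs /= sqr_sqrtr ?addr_ge0 ?sqr_ge0 //.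
by simpc; rewrite -!expr2 [b * a]mulrC addNr.
Qed.

Lemma cabsJ (z : CC) : cabs (cj z) = cabs z.
Proof. by case: z => a b; rewrite /cabs /= sqrrN. Qed.

Lemma cabsR (x : R) : cabs ((x%:C)%C) = `|x|.
Proof. by rewrite /cabs /= expr0n /= addr0 sqrtr_sqr. Qed.

Lemma cabsD (z w : CC) : cabs (z + w) <= cabs z + cabs w.
Proof. by case: z => a b; case: w => c d; exact: (@le_normcD R (a +i* b)%C (c +i* d)%C). Qed.

Lemma cabs1 : cabs (1 : CC) = 1.
Proof. by rewrite /cabs /= expr1n expr0n /= addr0 sqrtr1. Qed.

Lemma cabs0 : cabs (0 : CC) = 0.
Proof. by rewrite /cabs /= expr0n /= addr0 sqrtr0. Qed.

Lemma cabs_sum (I : finType) (F : I -> CC) :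
  cabs (\sum_i F i) <= \sum_i cabs (F i).
Proof.
elim/big_rec2: _ => [|i y1 y2 _ h]; first by rewrite cabs0.
by apply: (le_trans (cabsD _ _)); rewrite lerD2l.
Qed.

Lemma cabs_prod (I : finType) (F : I -> CC) :
  cabs (\prod_i F i) = \prod_i cabs (F i).
Proof.
elim/big_rec2: _ => [|i y1 y2 _ h]; first by rewrite cabs1.
by rewrite cabsM h.
Qed.

Lemma rc_sum (I : finType) (f : I -> R) :
  (((\sum_i f i)%:C)%C : CC) = \sum_i ((f i)%:C)%C.
Proof. exact: rmorph_sum. Qed.

Definition ipc (I : finType) (u v : I -> CC) : CC := \sum_i u i * cj (v i).
Definition nrm (I : finType) (u : I -> CC) : R := \sum_i cabs (u i) ^+ 2.

Lemma nrm_ge0 (I : finType) (u : I -> CC) : 0 <= nrm u.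
Proof. by apply: sumr_ge0 => i _; rewrite sqr_ge0. Qed.

Lemma ipc_nrm (I : finType) (u : I -> CC) : ipc u u = ((nrm u)%:C)%C.
Proof. by rewrite /ipc rmorph_sum; apply: eq_bigr => i _; rewrite mulcJ. Qed.

Lemma ipcC (I : finType) (u v : I -> CC) : ipc v u = cj (ipc u v).
Proof.
rewrite /ipc rmorph_sum; apply: eq_bigr => i _.
by rewrite rmorphM /= conjcK mulrC.
Qed.

Lemma CS (I : finType) (u F : I -> CC) : nrm F = 1 ->
  cabs (ipc u F) ^+ 2 <= nrm u.
Proof.
move=> hF; set a := ipc u F.
have E : ((nrm (fun i => u i - a * F i))%:C)%C = ((nrm u - cabs a ^+ 2)%:C)%C.
  rewrite -ipc_nrm rmorphB /= -mulcJ -ipc_nrm /ipc.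
  rewrite (eq_bigr (fun i => u i * cj (u i) - cj a * (u i * cj (F i))
     - a * (F i * cj (u i)) + a * cj a * (F i * cj (F i)))); last first.
    by move=> i _; rewrite rmorphB rmorphM; ring.
  rewrite big_split /= !sumrB -!mulr_sumr.
  have h1 : \sum_i u i * cj (F i) = a by [].
  have h2 : \sum_i F i * cj (u i) = cj a by rewrite -ipcC.
  have h3 : \sum_i F i * cj (F i) = 1 by rewrite -/(ipc F F) ipc_nrm hF.
  rewrite h1 h2 h3; ring.
have := nrm_ge0 (fun i => u i - a * F i).
by move/complexI: E => ->; rewrite subr_ge0.
Qed.

Lemma symsum (J : finType) (a : J -> R) (G : J -> J -> R) :
  (forall m m', 0 <= G m m') -> (forall m m', G m m' = G m' m) ->
  \sum_m \sum_m' a m * a m' * G m m' <= \sum_m a m ^+ 2 * \sum_m' G m m'.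
Proof.
move=> G0 Gs.
apply: (@le_trans _ _ (\sum_m \sum_m' (a m ^+ 2 * G m m' + a m' ^+ 2 * G m m') / 2)).
  apply: ler_sum => m _; apply: ler_sum => m' _.
  have := G0 m m'; have := sqr_ge0 (a m - a m'); nra.
have e : \sum_m \sum_m' a m' ^+ 2 * G m m' = \sum_m \sum_m' a m ^+ 2 * G m m'.
  rewrite exchange_big /=; apply: eq_bigr => m _; apply: eq_bigr => m' _.
  by rewrite Gs.
under eq_bigr do rewrite -mulr_suml big_split /=.
rewrite -mulr_suml big_split /= e.
under [X in _ <= X]eq_bigr do rewrite mulr_sumr.
lra.
Qed.

Lemma lovasz (I J : finType) (T : J -> I -> CC) (F : I -> CC) (B : R) :
  nrm F = 1 -> 0 <= B ->
  (forall m, \sum_m' cabs (ipc (T m) (T m')) <= B) ->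
  \sum_m cabs (ipc (T m) F) ^+ 2 <= B.
Proof.
move=> hF B0 hB.
pose c m := cj (ipc (T m) F).
pose u i := \sum_m c m * T m i.
pose A := \sum_m cabs (ipc (T m) F) ^+ 2.
have A0 : 0 <= A by apply: sumr_ge0 => m _; rewrite sqr_ge0.
have hA : ipc u F = ((A%:C)%C).
  rewrite /ipc /u.
  under eq_bigr do rewrite mulr_suml.
  rewrite exchange_big /= rc_sum; apply: eq_bigr => m _.
  rewrite -mulcJ mulrC -/(c m).
  under eq_bigr do rewrite -mulrA.
  by rewrite -mulr_sumr.
have hu : ((nrm u)%:C)%C = \sum_m \sum_m' c m * cj (c m') * ipc (T m) (T m').
  rewrite -ipc_nrm /ipc /u.
  under eq_bigr do rewrite rmorph_sum mulr_suml.
  under eq_bigr do under eq_bigr do rewrite mulr_sumr.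
  rewrite exchange_big /=; apply: eq_bigr => m _.
  rewrite exchange_big /=; apply: eq_bigr => m' _.
  rewrite mulr_sumr; apply: eq_bigr => i _.
  by rewrite rmorphM /=; ring.
pose a m := cabs (ipc (T m) F).
pose G m m' := cabs (ipc (T m) (T m')).
have hnu : nrm u <= \sum_m \sum_m' a m * a m' * G m m'.
  have -> : nrm u = cabs ((nrm u)%:C)%C by rewrite cabsR ger0_norm ?nrm_ge0.
  rewrite hu; apply: (le_trans (cabs_sum _)); apply: ler_sum => m _.
  apply: (le_trans (cabs_sum _)); apply: ler_sum => m' _.
  by rewrite !cabsM !cabsJ.
have hs : \sum_m \sum_m' a m * a m' * G m m' <= \sum_m a m ^+ 2 * \sum_m' G m m'.
  by apply: symsum => [m m'|m m']; rewrite /G ?cabs_ge0 // ipcC cabsJ.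
have hAB : \sum_m a m ^+ 2 * \sum_m' G m m' <= A * B.
  rewrite /A mulr_suml; apply: ler_sum => m _.
  by apply: ler_wpM2l; [rewrite sqr_ge0 | exact: hB].
have hcs := CS u hF.
rewrite hA cabsR ger0_norm // in hcs.
have : A ^+ 2 <= A * B by lra.
rewrite -/A; nra.
Qed.

Definition tens (n d : nat) (g : 'I_n -> 'I_d -> CC) : {ffun 'I_n -> 'I_d} -> CC :=
  fun j => \prod_i g i (j i).

Lemma ipc_tens (n d : nat) (g h : 'I_n -> 'I_d -> CC) :
  ipc (tens g) (tens h) = \prod_i ipc (g i) (h i).
Proof.
rewrite /ipc bigA_distr_bigA; apply: eq_bigr => j _.
by rewrite /tens rmorph_prod -big_split.
Qed.

Lemma sqrt_prod (I : finType) (F : I -> R) : (forall i, 0 <= F i) ->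
  Num.sqrt (\prod_i F i) = \prod_i Num.sqrt (F i).
Proof.
move=> F0.
suff [] : 0 <= \prod_i F i /\ Num.sqrt (\prod_i F i) = \prod_i Num.sqrt (F i) by [].
elim/big_rec2: _ => [|i y1 y2 _ [h1 h2]]; first by rewrite sqrtr1.
by split; [rewrite mulr_ge0 | rewrite sqrtrM // h2].
Qed.

Lemma powR_prod (I : finType) (F : I -> R) (p : R) : (forall i, 0 <= F i) ->
  (\prod_i F i) `^ p = \prod_i (F i `^ p).
Proof.
move=> F0.
suff [] : 0 <= \prod_i F i /\ (\prod_i F i) `^ p = \prod_i (F i `^ p) by [].
elim/big_rec2: _ => [|i y1 y2 _ [h1 h2]]; first by rewrite powR1.
by split; [rewrite mulr_ge0 | rewrite powRM // h2].
Qed.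

Lemma bern (y p : R) : 0 <= y -> 0 < p <= 1 -> y `^ p <= p * y + (1 - p).
Proof.
move=> y0 /andP[p0 p1].
have [->|pl1] := eqVneq p 1; first by rewrite powRr1 // subrr addr0 mul1r.
have p1' : p < 1 by rewrite lt_neqAle pl1 p1.
have hq : 0 < (1 - p)^-1 by rewrite invr_gt0 subr_gt0.
have hp : 0 < p^-1 by rewrite invr_gt0.
have hpq : (p^-1)^-1 + ((1 - p)^-1)^-1 = 1 by rewrite !invrK addrC subrK.
have := conjugate_powR (powR_ge0 y p) ler01 hp hq hpq.
rewrite mulr1 -powRrM mulfV ?gt_eqF // powRr1 // powR1 !invrK.
by rewrite mul1r mulrC.
Qed.

Lemma bigmax_ub (I : finType) (F : I -> R) i : F i <= \big[Num.max/0]_j F j.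
Proof.
rewrite unlock /index_enum; move: (mem_index_enum i); rewrite /index_enum.
elim: (Finite.enum I) => // a r IH; rewrite inE => /orP[/eqP ->|/IH h] /=.
  by rewrite le_max lexx.
by rewrite le_max h orbT.
Qed.

Lemma bigmax_ge0 (I : finType) (F : I -> R) : 0 <= \big[Num.max/0]_j F j.
Proof. by elim/big_rec: _ => // i x _ h; rewrite le_max h orbT. Qed.

Lemma powsum (J : finType) (P : pred J) (b : J -> R) (p : R) :
  (forall j, 0 <= b j) -> 0 < p <= 1 ->
  \sum_(j | P j) b j `^ p <= (#|P|%:R) `^ (1 - p) * (\sum_(j | P j) b j) `^ p.
Proof.
move=> b0 hp; have /andP[p0 p1] := hp.
set S := \sum_(j | P j) b j; set N : R := #|P|%:R.
have S0 : 0 <= S by apply: sumr_ge0.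
have [Sz|Snz] := eqVneq S 0.
  have bz : forall j, P j -> b j = 0.
    by apply/(psumr_eq0P (fun j _ => b0 j)); rewrite -/S Sz.
  rewrite big1 ?mulr_ge0 ?powR_ge0 // => j Pj.
  by rewrite bz // powR0 ?gt_eqF.
have Sp : 0 < S by rewrite lt_neqAle eq_sym Snz.
have N0 : 0 < N.
  rewrite ltr0n lt0n; apply/negP => /eqP c; move: Snz.
  by rewrite /S (big_pred0 _ _ _ _ (card0_eq c)) eqxx.
pose s := S / N.
have sp : 0 < s by rewrite divr_gt0.
have step : forall j, b j `^ p <= s `^ p * (p * (b j / s) + (1 - p)).
  move=> j; rewrite {1}(_ : b j = s * (b j / s)); last by field; rewrite gt_eqF.
  rewrite powRM; last 2 first. exact: ltW. by rewrite divr_ge0 // ltW.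
  apply: ler_wpM2l; first exact: powR_ge0.
  by apply: bern => //; rewrite divr_ge0 // ltW.
apply: (le_trans (ler_sum _ (fun j _ => step j))).
rewrite -mulr_sumr big_split /= sumr_const.
rewrite (eq_bigr (fun j => (p / s) * b j)); last by move=> j _; rewrite mulrA mulrAC.
rewrite -mulr_sumr -/S.
have e1 : p / s * S + (1 - p) *+ #|P| = N.
  by rewrite /s -mulr_natr -/N; field; rewrite -/N !gt_eqF.
rewrite e1 /s powRM; last 2 first. by []. by rewrite invr_ge0 ltW.
rewrite powRB; last by rewrite (gt_eqF N0) implybT.
rewrite powRr1; last exact: ltW.
have e2 : (N^-1) `^ p * N `^ p = 1 by rewrite -powRM ?invr_ge0 ?ltW // mulVf ?gt_eqF // powR1.
have e3 : (N^-1) `^ p = (N `^ p)^-1.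
  by apply: (mulIf (x := N `^ p)); rewrite ?powR_eq0 ?gt_eqF // e2 mulVf // powR_eq0 gt_eqF.
rewrite e3 le_eqVlt; apply/orP; left; apply/eqP; field; by rewrite powR_eq0 (gt_eqF N0).
Qed.

Lemma ipPsi_prod (X Y : finType) (W : X -> Y -> R) (hW : forall x y, 0 <= W x y)
  (n : nat) (xm xm' : 'I_n -> X) :
  ip_Psi W xm xm' = \prod_i ip_psi W (xm i) (xm' i).
Proof.
rewrite /ip_Psi /ip_psi bigA_distr_bigA; apply: eq_bigr => y _.
rewrite -big_split /= sqrt_prod; last by move=> i; rewrite mulr_ge0.
by apply: eq_bigr => i _; rewrite sqrtrM.
Qed.

Lemma ip_psi_ge0 (X Y : finType) (W : X -> Y -> R) x x' : 0 <= ip_psi W x x'.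
Proof. by apply: sumr_ge0 => y _; rewrite mulr_ge0 ?sqrtr_ge0. Qed.

Lemma ip_psi_le1 (X Y : finType) (W : X -> Y -> R) x x' : is_channel W ->
  ip_psi W x x' <= 1.
Proof.
move=> [W0 W1].
apply: (@le_trans _ _ (\sum_y (W x y + W x' y) / 2)).
  apply: ler_sum => y _.
  have h1 := sqr_sqrtr (W0 x y); have h2 := sqr_sqrtr (W0 x' y).
  have := sqr_ge0 (Num.sqrt (W x y) - Num.sqrt (W x' y)).
  rewrite !expr2 in h1 h2 *; nra.
by rewrite -mulr_suml big_split /= !W1; lra.
Qed.

Definition emb (Y : finType) (h : Y -> CC) : 'I_(#|Y|.+1) -> CC :=
  fun j => match unlift ord0 j with Some k => h (enum_val k) | None => 0 end.

Lemma sum_emb (Y : finType) (h : Y -> CC) : \sum_j emb h j = \sum_y h y.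
Proof.
rewrite big_ord_recl /emb unlift_none add0r.
under eq_bigr do rewrite liftK.
rewrite [RHS](reindex (@enum_val Y (pred_of_simpl predT))) //.
apply: onW_bij; exact: enum_val_bij.
Qed.

Lemma rcM (a b : R) : ((a%:C)%C * (b%:C)%C : CC) = ((a * b)%:C)%C.
Proof. by simpc. Qed.

Lemma emb_mul (Y : finType) (h h' : Y -> CC) j :
  emb h j * cj (emb h' j) = emb (fun y => h y * cj (h' y)) j.
Proof. by rewrite /emb; case: (unlift _ _) => [k|]; rewrite ?mul0r. Qed.

Lemma emb_mulc (Y : finType) (h : Y -> CC) c j :
  emb h j * c = emb (fun y => h y * c) j.
Proof. by rewrite /emb; case: (unlift _ _) => [k|]; rewrite ?mul0r. Qed.

Lemma rep_nonempty (X Y : finType) (W : X -> Y -> R) (rho : R) :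
  is_channel W -> 1 <= rho -> (rep_values W rho !=set0)%classic.
Proof.
move=> HW hrho; have [W0 W1] := HW.
pose d := #|Y|.+1.
pose t (x : X) : 'I_d -> CC := emb (fun y => (Num.sqrt (W x y))%:C)%C.
pose c : R := (Num.sqrt (d%:R))^-1.
have c0 : 0 < c by rewrite invr_gt0 sqrtr_gt0 ltr0n.
pose f : 'I_d -> CC := fun _ => (c%:C)%C.
have tt x x' : cinner (t x) (t x') = ((ip_psi W x x')%:C)%C.
  rewrite /cinner /t; under eq_bigr do rewrite emb_mul.
  rewrite sum_emb /ip_psi rc_sum; apply: eq_bigr => y _.
  by rewrite conjc_real rcM.
have tf x : cinner (t x) f = (((\sum_y Num.sqrt (W x y)) * c)%:C)%C.
  rewrite /cinner /t /f; under eq_bigr do rewrite emb_mulc.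
  rewrite sum_emb mulr_suml rc_sum; apply: eq_bigr => y _.
  by rewrite conjc_real rcM.
have sp x : 0 < \sum_y Num.sqrt (W x y).
  rewrite lt_neqAle sumr_ge0 ?andbT => [|y _]; last exact: sqrtr_ge0.
  apply/eqP => /esym h.
  have h0 : forall y, W x y = 0.
    move=> y; have := @psumr_eq0P R Y xpredT (fun y => Num.sqrt (W x y)) (fun y _ => sqrtr_ge0 (W x y)) h y isT.
    move=> /eqP; rewrite sqrtr_eq0 => hy; apply/eqP.
    by rewrite eq_le hy W0.
  have := W1 x; rewrite big1 => [|y _]; last exact: h0.
  by move/eqP; rewrite eq_sym oner_eq0.
exists (\big[Num.max/0]_(x : X) ln ((cabs (cinner (t x) f) ^+ 2)^-1)), d, t, f.
split => //.
- split => [x|x x'].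
    rewrite /unit_vec tt; congr (_%:C)%C; rewrite /ip_psi -(W1 x).
    by apply: eq_bigr => y _; rewrite -expr2 sqr_sqrtr.
  rewrite tt cabsR ger0_norm ?ip_psi_ge0 //.
  have [->|pz] := eqVneq (ip_psi W x x') 0; first exact: powR_ge0.
  apply: ger1_powR; first by rewrite lt_neqAle eq_sym pz ip_psi_ge0 ip_psi_le1.
  have r0 : 0 < rho by apply: lt_le_trans hrho.
  by rewrite invf_le1.
- change (ipc f f = 1); rewrite ipc_nrm; congr (_%:C)%C.
  rewrite /nrm /f; under eq_bigr do rewrite cabsR ger0_norm ?(ltW c0) //.
  rewrite sumr_const card_ord /c exprVn sqr_sqrtr ?ler0n // -[X in X = _]mulr_natr.
  by rewrite mulVf // pnatr_eq0.
- move=> x; rewrite tf cabsR ger0_norm ?mulr_gt0 //.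
  by rewrite mulr_ge0 // ?ltW // sumr_ge0 // => y _; rewrite sqrtr_ge0.
Qed.

Lemma claim (X Y : finType) (W : X -> Y -> R) (HW : is_channel W) (n M : nat)
  (code : 'I_M -> 'I_n -> X) (rho : R) (hrho : 1 <= rho) (v : R) :
  (0 < M)%N -> rep_values W rho v ->
  M%:R * expR (- (n%:R * v)) <= 1 + (M%:R - 1) `^ (1 - rho^-1) *
    (\big[Num.max/0]_(m < M) (\sum_(m' < M | m' != m) ip_Psi W (code m) (code m'))) `^ (rho^-1).
Proof.
move=> M0 [d [t [f [[tunit tbd] funit fpos ->]]]].
have [W0 W1] := HW.
set p := rho^-1.
have r0 : 0 < rho by apply: lt_le_trans hrho.
have p0 : 0 < p by rewrite invr_gt0.
have p1 : p <= 1 by rewrite invf_le1.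
set Smax := \big[Num.max/0]_(m < M) _.
set K := _ * Smax `^ p.
have tunit' x : ipc (t x) (t x) = 1 by exact: tunit.
have tbd' x x' : cabs (ipc (t x) (t x')) <= ip_psi W x x' `^ p by exact: tbd.
have funit' : ipc f f = 1 by exact: funit.
pose T m := tens (fun i => t (code m i)).
pose F := tens (fun _ : 'I_n => f).
have hF : nrm F = 1.
  apply: (@complexI R); rewrite -ipc_nrm /F ipc_tens big1 // => i _; exact: funit'.
have hp : 0 < p <= 1 by rewrite p0 p1.
have K0 : 0 <= K by rewrite mulr_ge0 ?powR_ge0.
have Psi0 m m' : 0 <= ip_Psi W (code m) (code m').
  by rewrite ipPsi_prod // prodr_ge0 // => i _; rewrite ip_psi_ge0.
have hrow m : \sum_m' cabs (ipc (T m) (T m')) <= 1 + K.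
  rewrite (bigD1 m) //=; apply: lerD.
    by rewrite /T ipc_tens cabs_prod big1 // => i _; rewrite tunit' cabs1.
  apply: (@le_trans _ _ (\sum_(m' | m' != m) (ip_Psi W (code m) (code m')) `^ p)).
    apply: ler_sum => m' _; rewrite /T ipc_tens cabs_prod ipPsi_prod //.
    rewrite powR_prod => [|i]; last exact: ip_psi_ge0.
    by apply: ler_prod => i _; rewrite cabs_ge0 tbd'.
  apply: (le_trans (powsum _ (fun m' => Psi0 m m') hp)).
  have cP : #|(fun j : 'I_M => j != m)| = M.-1.
    have := cardC1 m; rewrite card_ord => <-.
    by apply: eq_card => j; rewrite !inE.
  rewrite cP -subn1 natrB // /K; apply: ler_wpM2l; first exact: powR_ge0.
  apply: (ge0_ler_powR (ltW p0)).
  - by rewrite nnegrE sumr_ge0 // => j _; exact: Psi0.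
  - by rewrite nnegrE bigmax_ge0.
  exact: (bigmax_ub (fun m => \sum_(m' < M | m' != m) ip_Psi W (code m) (code m')) m).
have hL := lovasz hF (addr_ge0 ler01 K0) hrow.
apply: le_trans hL.
have -> : M%:R * expR (- (n%:R * \big[Num.max/0]_(x : X) ln ((cabs (cinner (t x) f) ^+ 2)^-1)))
   = \sum_(m < M) expR (- (n%:R * \big[Num.max/0]_(x : X) ln ((cabs (cinner (t x) f) ^+ 2)^-1))).
  by rewrite sumr_const card_ord mulr_natl.
set vv := \big[Num.max/0]_(x : X) _.
apply: ler_sum => m _.
have lowc x : expR (- vv) <= cabs (ipc (t x) f) ^+ 2.
  have c2 : 0 < cabs (ipc (t x) f) ^+ 2 by rewrite exprn_gt0 //; exact: fpos.
  have hv : ln ((cabs (ipc (t x) f) ^+ 2)^-1) <= vv.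
    exact: (bigmax_ub (fun x => ln ((cabs (cinner (t x) f) ^+ 2)^-1)) x).
  rewrite expRN -[X in _ <= X]invrK lef_pV2 ?posrE ?expR_gt0 ?invr_gt0 //.
  by rewrite -(lnK (x := (cabs (ipc (t x) f) ^+ 2)^-1)) ?posrE ?invr_gt0 // ler_expR.
rewrite /T /F ipc_tens cabs_prod -prodrXl.
have -> : expR (- (n%:R * vv)) = \prod_(i < n) expR (- vv).
  by rewrite prodr_const card_ord -expRM_natl mulrN.
by apply: ler_prod => i _; rewrite expR_ge0 lowc.
Qed.
End CH.

Theorem theorem1 (R : realType) (X Y : finType) (W : X -> Y -> R)
  (HW : is_channel W) (n M : nat) (hM : (2 <= M)%N)
  (code : 'I_M -> 'I_n -> X) (rho : R) (hrho : 1 <= rho) :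
  \big[Num.max/0]_(m < M) (\sum_(m' < M | m' != m) ip_Psi W (code m) (code m'))
  >= (Num.max 0 (M%:R * expR (- (n%:R * vartheta W rho)) - 1)) `^ rho
     / (M%:R - 1) `^ (rho - 1).
Proof.
set S := \big[Num.max/0]_(m < M) _.
set th := vartheta W rho.
have M0 : (0 < M)%N by apply: leq_trans hM.
have Mr : (0 : R) < M%:R by rewrite ltr0n.
have M1 : (0 : R) < M%:R - 1 by rewrite subr_gt0 ltr1n.
have r0 : (0 : R) < rho by apply: lt_le_trans hrho.
set K := (M%:R - 1) `^ (1 - rho^-1) * S `^ (rho^-1).
have K0 : 0 <= K by rewrite mulr_ge0 ?powR_ge0.
have hc v : rep_values W rho v -> M%:R * expR (- (n%:R * v)) <= 1 + K.
  exact: claim.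
have hne := rep_nonempty HW hrho.
set L := ln ((1 + K) / M%:R).
have hK : 0 < (1 + K) / M%:R by rewrite divr_gt0 // ltr_wpDr.
have hv v : rep_values W rho v -> - (n%:R * v) <= L.
  move=> hv; rewrite -ler_expR /L lnK ?posrE // ler_pdivlMr // mulrC.
  exact: hc.
have hth : - (n%:R * th) <= L.
  have [n0|np] := eqVneq n 0%N.
    have [v0 hv0] := hne; have := hv v0 hv0.
    by rewrite n0 !mul0r.
  have nr : (0 : R) < n%:R by rewrite ltr0n lt0n.
  have lb : - L / n%:R <= th.
    apply: lb_le_inf => // v /hv h.
    by rewrite ler_pdivrMr // mulrC; lra.
  by move: lb; rewrite ler_pdivrMr // mulrC; lra.
have key : M%:R * expR (- (n%:R * th)) - 1 <= K.
  have : expR (- (n%:R * th)) <= (1 + K) / M%:R.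
    by rewrite -(lnK (x := (1 + K) / M%:R)) ?posrE // ler_expR.
  by rewrite ler_pdivlMr // => h; rewrite mulrC; lra.
rewrite ler_pdivrMr; last exact: powR_gt0.
have X0 : Num.max 0 (M%:R * expR (- (n%:R * th)) - 1) <= K by rewrite ge_max K0 key.
have S0 : 0 <= S by apply: bigmax_ge0.
apply: (le_trans (ge0_ler_powR (ltW r0) _ _ X0)).
- by rewrite nnegrE le_max lexx.
- by rewrite nnegrE.
rewrite /K powRM ?powR_ge0 // -!powRrM.
have -> : (1 - rho^-1) * rho = rho - 1 by field; rewrite gt_eqF.
have -> : rho^-1 * rho = 1 by rewrite mulVf // gt_eqF.
by rewrite powRr1 // mulrC.
Qed.
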